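(* Let $G$ be a finite group generated by a conjugacy class $X$ and assume that the derived subgroup $[G,G]$ is a non-abelian simple group. Let $V$ be an irreducible Yetter--Drinfeld module over $kG$ with support $X$. Then $V$ admits no non-trivial decreasing filtration, i.e. no decreasing filtration $(\mathcal F^iV)_{i\ge0}$ of the braided vector space $V$ in which some $\mathcal F^iV$ is neither $\{0\}$ nor $V$.
   Context: A Yetter--Drinfeld module over $kG$ is a $kG$-module $V$ with a $G$-grading $V=\bigoplus_gV_g$, $hV_g\subseteq V_{hgh^{-1}}$; support $\{g:V_g\ne0\}$; braiding $c(v\otimes w)=gw\otimes v$ for $v\in V_g$. A decreasing filtration of a braided vector space $(V,c)$ is a family of subspaces $(\mathcal F^iV)_{i\ge0}$ with $V=\mathcal F^0V\supseteq\mathcal F^kV\supseteq\mathcal F^lV$ for $0\le k\le l$, $\bigcap_i\mathcal F^iV=0$, and $c(\mathcal F^iV\otimes\mathcal F^jV)\subseteq\sum_{k+l\ge i+j}\mathcal F^kV\otimes\mathcal F^lV$ for all $i,j$. *)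

(* Defs.v *)
From HB Require Import structures.
From mathcomp Require Import all_boot all_order all_algebra all_fingroup all_solvable.
Set Implicit Arguments. Unset Strict Implicit. Unset Printing Implicit Defensive.
Import GRing.Theory.
Local Open Scope ring_scope.

Section YD.
Variables (gT : finGroupType) (G : {group gT}) (k : fieldType) (V : vectType k).

(* Note: h g h^-1 is written (g ^ h^-1)%g in mathcomp.                      *)
Definition is_YD (act : gT -> 'End(V)) (Vg : gT -> {vspace V}) : Prop :=
  [/\ act 1%g = \1%VF,
      (forall g h, g \in G -> h \in G -> act (g * h)%g = (act g \o act h)%VF),
      directv (\sum_(g in G) Vg g)%VS,
      (\sum_(g in G) Vg g)%VS = fullv &
      (forall g h, g \in G -> h \in G -> (act h @: Vg g <= Vg (g ^ h^-1)%g)%VS)].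

Definition YD_support (Vg : gT -> {vspace V}) : {set gT} :=
  [set g in G | Vg g != 0%VS].

Definition YD_submodule (act : gT -> 'End(V)) (Vg : gT -> {vspace V})
    (W : {vspace V}) : Prop :=
  (forall h, h \in G -> (act h @: W <= W)%VS) /\
  W = (\sum_(g in G) (W :&: Vg g))%VS.

Definition YD_irreducible (act : gT -> 'End(V)) (Vg : gT -> {vspace V}) : Prop :=
  fullv != (0 : {vspace V})%VS /\
  forall W, YD_submodule act Vg W -> W = 0%VS \/ W = fullv.

(* Model of V (x) V: the matrices 'M_(n,n), n = dim V, via coordinates in a *)
(* fixed basis;  v (x) w  is the matrix (x_i y_j).                           *)
Definition tens (v w : V) : 'M[k]_(\dim (fullv : {vspace V})) :=
  \matrix_(i, j) (coord (vbasis fullv) i v * coord (vbasis fullv) j w).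

(* The subspace A (x) B of V (x) V, as a row space of vectorised matrices. *)
Definition tens_space (A B : {vspace V}) :=
  (\sum_(a <- vbasis A) \sum_(b <- vbasis B) <<mxvec (tens a b)>>)%MS.

Definition is_YD_braiding (act : gT -> 'End(V)) (Vg : gT -> {vspace V})
    (c : 'M[k]_(\dim (fullv : {vspace V})) -> 'M[k]_(\dim (fullv : {vspace V}))) : Prop :=
  (forall a M N, c (a *: M + N) = a *: c M + c N) /\
  (forall g v w, g \in G -> v \in Vg g -> c (tens v w) = tens (act g w) v).

(* sum_{k+l >= i+j} F^k (x) F^l is the union of its finite partial sums.    *)
Definition decreasing_filtration
    (c : 'M[k]_(\dim (fullv : {vspace V})) -> 'M[k]_(\dim (fullv : {vspace V})))
    (F : nat -> {vspace V}) : Prop :=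
  [/\ F 0%N = fullv,
      (forall i j, (i <= j)%N -> (F j <= F i)%VS),
      (forall v, (forall i, v \in F i) -> v = 0) &
      (forall i j M, (mxvec M <= tens_space (F i) (F j))%MS ->
         exists N, (mxvec (c M) <=
           \sum_(p < N) \sum_(q < N | (i + j <= p + q)%N)
              tens_space (F p) (F q))%MS)].

End YD.

(* Main.v *)
Require Import Defs.
From HB Require Import structures.
From mathcomp Require Import all_boot all_order all_algebra all_fingroup all_solvable.
Set Implicit Arguments. Unset Strict Implicit. Unset Printing Implicit Defensive.
Import GRing.Theory.
Local Open Scope ring_scope.
Section Tens.
Variables (k : fieldType) (V : vectType k).
Local Notation n := (\dim (fullv : {vspace V})).
Local Notation e := (vbasis (fullv : {vspace V})).

Definition crow (v : V) : 'rV[k]_n := \row_i coord e i v.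

Lemma crowP a u w : crow (a *: u + w) = a *: crow u + crow w.
Proof. by apply/rowP=> i; rewrite !mxE linearP. Qed.

Lemma crow0 : crow 0 = 0.
Proof. by apply/rowP=> i; rewrite !mxE linear0. Qed.

Lemma crow_sum I (r : seq I) (P : pred I) (F : I -> V) :
  crow (\sum_(i <- r | P i) F i) = \sum_(i <- r | P i) crow (F i).
Proof.
elim/big_rec2: _ => [|i y1 y2 _ IH]; first exact: crow0.
by have := crowP 1 (F i) y2; rewrite !scale1r => ->; rewrite IH.
Qed.

Lemma crow_eq0 v : (crow v == 0) = (v == 0).
Proof.
apply/idP/idP => [/eqP h|/eqP ->]; last by rewrite crow0.
rewrite (coord_vbasis (memvf v)); apply/eqP; apply: big1 => i _.
by have := congr1 (fun r : 'rV[k]_n => r 0 i) h; rewrite !mxE => ->; rewrite scale0r.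
Qed.

Lemma tensE v w : tens v w = (crow v)^T *m crow w.
Proof. by apply/matrixP=> i j; rewrite !mxE big_ord1 !mxE. Qed.

Definition Mf (f : 'End(V)) : 'M[k]_n := \matrix_(i, j) coord e j (f e`_i).

Lemma crowf (f : 'End(V)) v : crow (f v) = crow v *m Mf f.
Proof.
apply/rowP=> j; rewrite !mxE {1}(coord_vbasis (memvf v)) linear_sum linear_sum.
by apply: eq_bigr => i _; rewrite linearZ linearZ /= !mxE.
Qed.

Notation Phi f g := (mulmxr (Mf g) \o mulmx (Mf f)^T).

Lemma Phi_tens f g v w : Phi f g (tens v w) = tens (f v) (g w).
Proof. by rewrite /= !tensE !crowf trmx_mul !mulmxA. Qed.

Lemma PhiE f g M : mxvec M *m lin_mx (Phi f g) = mxvec ((Mf f)^T *m M *m Mf g).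
Proof. by rewrite mul_vec_lin. Qed.

Lemma Phi_tens' f g v w : (Mf f)^T *m tens v w *m Mf g = tens (f v) (g w).
Proof. exact: Phi_tens. Qed.

Lemma tens_eq0 (v w : V) : (tens v w == 0) = (v == 0) || (w == 0).
Proof.
apply/idP/idP; last first.
  by case/orP=> /eqP->; rewrite tensE crow0 ?trmx0 ?mul0mx ?mulmx0.
apply: contraLR; rewrite negb_or -!crow_eq0 => /andP[/rV0Pn[i vi] /rV0Pn[j wj]].
apply/matrix0Pn; exists i, j; rewrite tensE !mxE big_ord1 !mxE; apply: mulf_neq0; by move: vi wj; rewrite !mxE => ? ?.
Qed.

Lemma crowZ a u : crow (a *: u) = a *: crow u.
Proof. by have := crowP a u 0; rewrite addr0 crow0 addr0. Qed.

Lemma tens_spaceE (A B : {vspace V}) : tens_space A B =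
  (\sum_(i < \dim A) \sum_(j < \dim B)
      <<mxvec (tens (vbasis A)`_i (vbasis B)`_j)>>)%MS.
Proof.
rewrite /tens_space big_tuple; apply: eq_bigr => i _; rewrite big_tuple.
by apply: eq_bigr => j _; rewrite !(tnth_nth 0).
Qed.

Lemma trS I (r : seq I) (P : pred I) (F : I -> 'rV[k]_n) :
  (\sum_(i <- r | P i) F i)^T = \sum_(i <- r | P i) (F i)^T.
Proof.
by apply/matrixP=> i j; rewrite !mxE !summxE; apply: eq_bigr => l _; rewrite !mxE.
Qed.

Lemma trZ a (M : 'rV[k]_n) : (a *: M)^T = a *: M^T.
Proof. by apply/matrixP=> i j; rewrite !mxE. Qed.

Lemma tens_mem (A B : {vspace V}) a b : a \in A -> b \in B ->
  (mxvec (tens a b) <= tens_space A B)%MS.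
Proof.
move=> Ha Hb; rewrite tensE (coord_vbasis Ha) (coord_vbasis Hb) !crow_sum.
rewrite mulmx_sumr linear_sum /=; apply: summx_sub => j _.
rewrite trS mulmx_suml linear_sum /=; apply: summx_sub => i _.
rewrite !crowZ linearZ /= trZ -scalemxAl !linearZ /=.
apply: scalemx_sub; apply: scalemx_sub; rewrite tens_spaceE.
apply: (sumsmx_sup i) => //; apply: (sumsmx_sup j) => //.
by rewrite genmxE tensE.
Qed.

Lemma tens_space_kill (A B : {vspace V}) (f g : 'End(V)) :
  ((forall a, a \in A -> f a = 0) \/ (forall b, b \in B -> g b = 0)) ->
  (tens_space A B <= kermx (lin_mx (Phi f g)))%MS.
Proof.
move=> Hk; rewrite tens_spaceE; apply/sumsmx_subP => i _; apply/sumsmx_subP => j _.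
rewrite genmxE sub_kermx PhiE Phi_tens'.
case: Hk => [Hf|Hg]; first by rewrite Hf ?vbasis_mem ?mem_nth ?size_tuple // mxvec_eq0 tens_eq0 eqxx.
by rewrite Hg ?vbasis_mem ?mem_nth ?size_tuple // mxvec_eq0 tens_eq0 eqxx orbT.
Qed.

End Tens.
Notation Phi f g := (mulmxr (Mf g) \o mulmx (Mf f)^T).
Section Quot.
Variables (k : fieldType) (V : vectType k).
Definition qm (U : {vspace V}) : 'End(V) := (\1%VF - projv U)%R.
Lemma qmE U v : qm U v = v - projv U v.
Proof. by rewrite /qm add_lfunE opp_lfunE id_lfunE. Qed.
Lemma qm_eq0 U v : (qm U v == 0) = (v \in U).
Proof.
rewrite qmE subr_eq0; apply/idP/idP => [/eqP ->|/projv_id ->//]; exact: memv_proj.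
Qed.
End Quot.

Section Filt.
Variables (k : fieldType) (V : vectType k).
Local Notation n := (\dim (fullv : {vspace V})).
Variables (c : 'M[k]_n -> 'M[k]_n) (F : nat -> {vspace V}).
Hypothesis HF : decreasing_filtration c F.

Lemma Fmono i j : (i <= j)%N -> (F j <= F i)%VS.
Proof. by move: HF => [_ H _ _]; apply: H. Qed.

Lemma filt_kill i j (M : 'M[k]_n) a b :
  (mxvec M <= tens_space (F i) (F j))%MS ->
  (forall p q, (i + j <= p + q)%N -> (a <= p)%N \/ (b <= q)%N) ->
  (Mf (qm (F a)))^T *m c M *m Mf (qm (F b)) = 0.
Proof.
move=> HM Hab; move: HF => [_ _ _ H4]; have [N HN] := H4 i j M HM.
have: (mxvec (c M) <= kermx (lin_mx (Phi (qm (F a)) (qm (F b)))))%MS.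
  apply: submx_trans HN _; apply/sumsmx_subP => p _; apply/sumsmx_subP => q Hpq.
  apply: tens_space_kill; case: (Hab p q Hpq) => H; [left|right] => u Hu;
    apply/eqP; rewrite qm_eq0; exact: (subvP (Fmono H)).
by rewrite sub_kermx PhiE mxvec_eq0 => /eqP.
Qed.
End Filt.
From Stdlib Require Import Classical.
From mathcomp Require Import zify ssrAC.

Lemma comm_id (V : zmodType) (A B C D w : V) :
  A - D = (A - B - (C - w)) - (D - C - (B - w)).
Proof.
rewrite !opprB !addrA.
rewrite (ACl (((3*(6*2))*(4*7)*(5*1))*8)%AC) /=.
by rewrite addNKr addNr addr0 addKr.
Qed.

Section Main.
Variables (gT : finGroupType) (G : {group gT}) (X : {set gT})
  (k : fieldType) (V : vectType k) (act : gT -> 'End(V)) (Vg : gT -> {vspace V}).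
Local Notation n := (\dim (fullv : {vspace V})).
Local Notation e := (vbasis (fullv : {vspace V})).
Variables (c : 'M[k]_n -> 'M[k]_n) (F : nat -> {vspace V}).
Hypothesis HYD : is_YD G act Vg.
Hypothesis Hsupp : YD_support G Vg = X.
Hypothesis Hbr : is_YD_braiding G act Vg c.
Hypothesis HF : decreasing_filtration c F.
Hypothesis HgenX : G :=: <<X>>%g.
Hypothesis Hcls : exists2 x0, x0 \in G & X = (x0 ^: G)%g.
Hypothesis Hsimp : simple [~: G, G]%g.
Hypothesis Hnab : ~~ abelian [~: G, G]%g.

Let Hfull : (\sum_(g in G) Vg g)%VS = fullv.
Proof. by case: HYD. Qed.
Let Hdir : directv (\sum_(g in G) Vg g).
Proof. by case: HYD. Qed.

Definition pi g : 'End(V) := sumv_pi_for (esym Hfull) g.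

Lemma pi_mem g v : pi g v \in Vg g.
Proof. exact: memv_sum_pi. Qed.

Lemma pi_sum v : \sum_(g in G) pi g v = v.
Proof. exact: (sumv_pi_sum (esym Hfull) (memvf v)). Qed.

Lemma pi_uniq (us : gT -> V) : (forall g, g \in G -> us g \in Vg g) ->
  forall g, g \in G -> pi g (\sum_(h in G) us h) = us g.
Proof.
move=> Hus g Gg; apply/eqP; rewrite -subr_eq0; apply/eqP.
move: g Gg; apply: (directv_sum_independent Hdir (fun h => pi h (\sum_(h in G) us h) - us h)).
  by move=> h Gh; rewrite memvB ?pi_mem ?Hus.
by rewrite sumrB pi_sum subrr.
Qed.

Lemma XsubG : X \subset G.
Proof. by rewrite -Hsupp; apply/subsetP => g; rewrite inE => /andP[]. Qed.

Lemma Vg_neq0 g : g \in X -> Vg g != 0%VS.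
Proof. by rewrite -Hsupp inE => /andP[]. Qed.

Lemma pi_out g v : g \in G -> g \notin X -> pi g v = 0.
Proof.
move=> Gg nX; have : Vg g = 0%VS.
  by apply/eqP; move: nX; rewrite -Hsupp inE Gg /= negbK.
by move=> h; have := pi_mem g v; rewrite h memv0 => /eqP.
Qed.

Lemma actM g h w : g \in G -> h \in G -> act (g * h)%g w = act g (act h w).
Proof. by move=> Gg Gh; case: HYD => _ H _ _ _; rewrite H // comp_lfunE. Qed.

Lemma act1 w : act 1%g w = w.
Proof. by case: HYD => H _ _ _ _; rewrite H id_lfunE. Qed.

Lemma actVK g w : g \in G -> act g^-1%g (act g w) = w.
Proof. by move=> Gg; rewrite -actM ?groupV // mulVg act1. Qed.

Lemma actKV g w : g \in G -> act g (act g^-1%g w) = w.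
Proof. by move=> Gg; rewrite -actM ?groupV // mulgV act1. Qed.

Lemma act_Vg g h v : g \in G -> h \in G -> v \in Vg g -> act h v \in Vg (g ^ h^-1)%g.
Proof.
move=> Gg Gh Hv; case: HYD => _ _ _ _ H.
by apply: (subvP (H g h Gg Gh)); apply: memv_img.
Qed.

Lemma cD M N : c (M + N) = c M + c N.
Proof. have [H _] := Hbr. by have := H 1 M N; rewrite !scale1r. Qed.

Lemma c0 : c 0 = 0.
Proof.
have := congr1 (fun x => x - c 0) (cD 0 0).
by rewrite addr0 subrr addrK => H; exact: (esym H).
Qed.

Lemma c_sum I (r : seq I) (P : pred I) (Ms : I -> 'M[k]_n) :
  c (\sum_(i <- r | P i) Ms i) = \sum_(i <- r | P i) c (Ms i).
Proof.
elim/big_rec2: _ => [|i y1 y2 _ IH]; first exact: c0.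
by rewrite cD IH.
Qed.

Lemma tens_suml I (r : seq I) (P : pred I) (vs : I -> V) w :
  tens (\sum_(i <- r | P i) vs i) w = \sum_(i <- r | P i) tens (vs i) w.
Proof.
rewrite tensE crow_sum trS mulmx_suml; apply: eq_bigr => i _; by rewrite tensE.
Qed.

Lemma c_tens v w : c (tens v w) = \sum_(g in G) tens (act g w) (pi g v).
Proof.
rewrite -{1}(pi_sum v) tens_suml c_sum; apply: eq_bigr => g Gg.
by move: Hbr => [_ H]; rewrite (H g) ?pi_mem.
Qed.

Lemma F0 : F 0 = fullv. Proof. by move: HF => [H _ _ _]. Qed.
Lemma Fint v : (forall i, v \in F i) -> v = 0. Proof. by move: HF => [_ _ H _]; apply: H. Qed.

Lemma exact_deg v : v != 0 -> exists d, v \in F d /\ v \notin F d.+1.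
Proof.
move=> nz; have [i Hi] : exists i, v \notin F i.
  apply: NNPP => H; move/eqP: nz; apply; apply: Fint => i; apply: NNPP => Hi.
  by apply: H; exists i; apply/negP.
case: (ex_minnP (ex_intro (fun i => v \notin F i) i Hi)) => m Hm Hmin.
have m0 : m != 0%N by apply: contraNneq Hm => ->; rewrite F0 memvf.
exists m.-1; rewrite prednK ?lt0n //; split => //.
apply: NNPP => /negP Hv; have := Hmin _ Hv; rewrite -ltnS prednK ?lt0n // ltnn //.
Qed.

Lemma stabX x j w : x \in X -> w \in F j -> act x w \in F j.
Proof.
move=> Xx Hw; have Gx : x \in G by apply: (subsetP XsubG).
set v := vpick (Vg x).
have nz : v != 0 by rewrite vpick0 Vg_neq0.
have [d [Hd Hd1]] := exact_deg nz.
have := filt_kill HF (a := j) (b := d.+1) (tens_mem Hd Hw).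
have [_ Hb] := Hbr; rewrite (Hb x) ?memv_pick // Phi_tens' => H.
have /eqP := H (fun p q _ => ltac:(lia)).
by rewrite tens_eq0 !qm_eq0 (negbTE Hd1) orbF.
Qed.

Lemma stab_prod j m (cs : 'I_m -> gT) : (forall i, cs i \in X) ->
  forall w, w \in F j -> act (\prod_i cs i)%g w \in F j.
Proof.
elim: m cs => [|m IH] cs Hcs w Hw; first by rewrite big_ord0 act1.
have GX i : cs i \in G by apply: (subsetP XsubG).
rewrite big_ord_recr /= actM ?GX //; last by apply: group_prod => i _.
by apply: (IH (fun i => cs (widen_ord (leqnSn m) i))) => // ; apply: stabX.
Qed.

Lemma stabG g j w : g \in G -> w \in F j -> act g w \in F j.
Proof.
rewrite HgenX => /gen_prodgP [m [cs Hcs ->]]; exact: stab_prod.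
Qed.

Lemma step2 i j v w l : v \in F i -> w \in F j ->
  \sum_(g in G) coord e l (qm (F j.+1) (act g w)) *: pi g v \in F i.
Proof.
move=> Hv Hw; have := filt_kill HF (a := j.+1) (b := i) (tens_mem Hv Hw).
rewrite c_tens mulmx_sumr mulmx_suml => H.
have {}H := H (fun p q _ => ltac:(lia)).
rewrite (eq_bigr _ (fun g _ => Phi_tens' _ _ _ _)) in H.
rewrite -qm_eq0 -crow_eq0; apply/eqP/rowP => m.
have := congr1 (fun M : 'M[k]_n => M l m) H; rewrite summxE !mxE => <-.
rewrite !linear_sum /=; apply: eq_bigr => g _.
by rewrite tensE !mxE big_ord1 !mxE !linearZ.
Qed.

Definition Bi i (lam : gT -> k) : Prop :=
  forall v, v \in F i -> \sum_(g in G) lam g *: pi g v \in F i.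

Lemma B_ext i l1 l2 : (forall g, l1 g = l2 g) -> Bi i l1 -> Bi i l2.
Proof.
move=> E H v Hv; rewrite (eq_bigr (fun g => l1 g *: pi g v)) ?H // => g _.
by rewrite E.
Qed.

Lemma B_const i a : Bi i (fun _ => a).
Proof. by move=> v Hv; rewrite -scaler_sumr pi_sum memvZ. Qed.

Lemma B_lin i a l1 l2 : Bi i l1 -> Bi i l2 -> Bi i (fun g => a * l1 g + l2 g).
Proof.
move=> H1 H2 v Hv.
rewrite (eq_bigr (fun g => a *: (l1 g *: pi g v) + l2 g *: pi g v)); last first.
  by move=> g _; rewrite scalerDl scalerA.
by rewrite big_split /= -scaler_sumr memvD ?memvZ ?H1 ?H2.
Qed.

Lemma B_mul i l1 l2 : Bi i l1 -> Bi i l2 -> Bi i (fun g => l1 g * l2 g).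
Proof.
move=> H1 H2 v Hv; have := H1 _ (H2 v Hv).
rewrite (eq_bigr (fun g => (l1 g * l2 g) *: pi g v)) // => g Gg.
by rewrite pi_uniq ?scalerA // => h _; rewrite memvZ ?pi_mem.
Qed.

Definition sep x y := exists j w l, w \in F j /\
  coord e l (qm (F j.+1) (act x w)) != coord e l (qm (F j.+1) (act y w)).

Lemma graded (Hsep : forall x y, x \in X -> y \in X -> x != y -> sep x y)
  i v x : v \in F i -> x \in X -> pi x v \in F i.
Proof.
move=> Hv Xx.
have: forall r, all (fun y => y \in X :\ x) r ->
    exists lam, [/\ Bi i lam, lam x = 1 & forall y, y \in r -> lam y = 0].
  elim=> [|y r IH] /=.
    by move=> _; exists (fun _ => 1); split => //; apply: B_const.
  case/andP; rewrite in_setD1 => /andP[yx Xy] /IH [lam [Bl l1 l0]].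
  have xy : x != y by rewrite eq_sym.
  have [j [w [l [Hw Hne]]]] := Hsep x y Xx Xy xy.
  set L := fun g => coord e l (qm (F j.+1) (act g w)).
  have BL : Bi i L by move=> u Hu; apply: step2.
  set a := (L x - L y)^-1.
  have anz : L x - L y != 0 by rewrite subr_eq0.
  exists (fun g => lam g * (a * L g + - (a * L y))); split.
  - by apply: B_mul => //; apply: B_lin => //; apply: B_const.
  - by rewrite l1 mul1r -mulrBr mulVf.
  - move=> z; rewrite inE => /orP[/eqP ->|zr]; first by rewrite subrr mulr0.
    by rewrite l0 // mul0r.
move=> /(_ (enum (X :\ x))) [].
  by apply/allP => y; rewrite mem_enum.
move=> lam [Bl l1 l0]; have := Bl v Hv.
have Gx : x \in G by apply: (subsetP XsubG).
rewrite (bigD1 x) //= l1 scale1r big1 ?addr0 // => g /andP[Gg gx].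
case: (boolP (g \in X)) => Xg; last by rewrite pi_out // scaler0.
by rewrite l0 ?scale0r // mem_enum in_setD1 gx.
Qed.

Lemma caseA (Hsep : forall x y, x \in X -> y \in X -> x != y -> sep x y)
  (Hirr : YD_irreducible G act Vg) i : F i = 0%VS \/ F i = fullv.
Proof.
case: Hirr => _; apply; split.
  move=> h Gh; apply/subvP => u /memv_imgP [w Hw ->]; exact: stabG.
apply/eqP; rewrite eqEsubv; apply/andP; split.
  apply/subvP => v Hv; rewrite -(pi_sum v); apply: memv_sumr => g Gg.
  rewrite memv_cap pi_mem andbT; case: (boolP (g \in X)) => Xg.
    exact: graded.
  by rewrite pi_out ?mem0v.
by apply/subv_sumP => g _; exact: capvSl.
Qed.

Definition Pm m g := g \in G /\ forall j w, w \in F j -> act g w - w \in F (j + m).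

Lemma Pm1 m : Pm m 1%g.
Proof. by split => // j w _; rewrite act1 subrr mem0v. Qed.

Lemma PmM m g h : Pm m g -> Pm m h -> Pm m (g * h)%g.
Proof.
move=> [Gg Hg] [Gh Hh]; split; first by rewrite groupM.
move=> j w Hw; rewrite actM // -[act g (act h w) - w](subrKA (act g w)).
have -> : act g (act h w) - act g w = act g (act h w - w) by rewrite linearB.
by rewrite memvD ?Hg // stabG ?Hh.
Qed.

Lemma Pm_prod m r (cs : 'I_r -> gT) : (forall i, Pm m (cs i)) -> Pm m (\prod_i cs i)%g.
Proof.
elim: r cs => [|r IH] cs Hcs; first by rewrite big_ord0; apply: Pm1.
rewrite big_ord_recr /=; apply: PmM => //.
exact: (IH (fun i => cs (widen_ord (leqnSn r) i))).
Qed.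

Lemma PmJ m h g : Pm m h -> g \in G -> Pm m (h ^ g)%g.
Proof.
move=> [Gh Hh] Gg; split; first by rewrite groupJ.
move=> j w Hw; rewrite /conjg actM ?groupV ?groupM // actM //.
rewrite -{2}(actVK w Gg) -linearB /=; apply: stabG; first by rewrite groupV.
by apply: Hh; apply: stabG.
Qed.

Lemma PmR a b g h : Pm a g -> Pm b h -> Pm (a + b) [~ g, h]%g.
Proof.
move=> [Gg Hg] [Gh Hh]; split; first by rewrite groupR.
move=> j w Hw; rewrite /commg /conjg !actM ?groupV ?groupM //.
rewrite -{2}(actVK w Gg) -(actVK (act g w) Gh).
rewrite -linearB /= -linearB /=; apply: stabG; rewrite ?groupV //.
apply: stabG; rewrite ?groupV //.
rewrite (comm_id (act g (act h w)) (act g w) (act h w) (act h (act g w)) w).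
have -> : act g (act h w) - act g w = act g (act h w - w) by rewrite linearB.
have -> : act h (act g w) - act h w = act h (act g w - w) by rewrite linearB.
rewrite memvB //.
- by rewrite (addnC a) addnA; apply: Hg; apply: Hh.
- by rewrite addnA; apply: Hh; apply: Hg.
- by rewrite groupV.
Qed.

Local Notation H := [~: G, G]%g.

Lemma HsubG : H \subset G.
Proof. exact: der1_subG. Qed.

Lemma nsep_P1 x y : x \in X -> y \in X -> x != y -> ~ sep x y ->
  forall g, g \in H -> Pm 1 g.
Proof.
move=> Xx Xy xy Hns.
have Gx : x \in G by apply: (subsetP XsubG).
have Gy : y \in G by apply: (subsetP XsubG).
have Hxy : forall j w, w \in F j -> act x w - act y w \in F j.+1.
  move=> j w Hw; apply: NNPP => Hn; apply: Hns; exists j, w.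
  have: crow (qm (F j.+1) (act x w - act y w)) != 0.
    by rewrite crow_eq0 qm_eq0; apply/negP.
  case/rV0Pn => l; rewrite mxE !linearB /= => Hl; exists l; split => //.
  by rewrite -subr_eq0.
set h := (x^-1 * y)%g.
have Ph : Pm 1 h.
  split; first by rewrite groupM ?groupV.
  move=> j w Hw; rewrite actM ?groupV // -{2}(actVK w Gx) -linearB /= addn1.
  apply: stabG; first by rewrite groupV.
  by rewrite -opprB memvN Hxy.
have Hh : h \in H.
  case: Hcls => x0 Gx0 EX; move: Xx Xy; rewrite EX => /imsetP [a Ga Ex] /imsetP [b Gb Ey].
  rewrite /h Ex Ey.
  have -> : (x0 ^ b = (x0 ^ a) ^ (a^-1 * b))%g by rewrite -conjgM mulKVg.
  by apply: mem_commg; rewrite ?groupJ ?groupM ?groupV.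
have h1 : h != 1%g by rewrite /h -eq_mulVg1.
have [_ Hs] := simpleP _ Hsimp.
set K := <<(h ^: H)>>%g.
have nKH : (K <| H)%g.
  rewrite /normal gen_subG class_subG //=.
  exact: subset_trans (class_norm h H) (norm_gen _).
have KH : K :=: H.
  case: (Hs [group of K] nKH) => // /= K1.
  by move: h1; have := mem_gen (class_refl H h); rewrite -/K K1 => /set1P ->; rewrite eqxx.
move=> g; rewrite -KH => /gen_prodgP [m [cs Hcs ->]]; apply: Pm_prod => i.
have /imsetP [z Hz ->] := Hcs i; apply: PmJ => //.
exact: (subsetP HsubG).
Qed.

Lemma H_perfect : [~: H, H]%g = H.
Proof.
have [_ Hs] := simpleP _ Hsimp.
have nD : ([~: H, H] <| H)%g by rewrite -derg1; apply: der_normal.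
case: (Hs [group of [~: H, H]%g] nD) => //= D1.
by move: Hnab; rewrite abelianE; move/commG1P: D1 => ->.
Qed.

Lemma H_Pm (HP1 : forall g, g \in H -> Pm 1 g) m g : g \in H -> Pm m.+1 g.
Proof.
elim: m g => [|m IH] g Hg; first exact: HP1.
move: Hg; rewrite -H_perfect => /gen_prodgP [r [cs Hcs ->]]; apply: Pm_prod => i.
have /imset2P [a b Ha Hb ->] := Hcs i.
by rewrite -addn1; apply: PmR; [apply: IH | apply: HP1].
Qed.

Lemma H_triv (HP1 : forall g, g \in H -> Pm 1 g) g w : g \in H -> act g w = w.
Proof.
move=> Hg; apply/eqP; rewrite -subr_eq0; apply/eqP; apply: Fint => i.
have [_ P] := H_Pm HP1 i Hg.
have := P 0%N w; rewrite F0 memvf add0n => /(_ isT) Hi.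
exact: (subvP (Fmono HF (leqnSn i))).
Qed.

Lemma pi_id g h v : g \in G -> h \in G -> v \in Vg g -> pi h v = if h == g then v else 0.
Proof.
move=> Gg Gh Hv.
have E : v = \sum_(l in G) (if l == g then v else 0).
  by rewrite (bigD1 g) //= eqxx big1 ?addr0 // => l /andP[_ /negbTE ->].
rewrite {1}E pi_uniq // => l Gl.
by case: eqP => [->|_] //; rewrite mem0v.
Qed.

Lemma not_HP1 : ~ (forall g, g \in H -> Pm 1 g).
Proof.
move=> HP1; case: Hcls => x0 Gx0 EX.
have Xx0 : x0 \in X by rewrite EX class_refl.
have [z Hz nz] : exists2 z, z \in H & (x0 ^ z^-1)%g != x0.
  apply: NNPP => Hn; move: Hnab; rewrite abelianE.
  have C : H \subset 'C(X)%g.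
    apply/centsP => z Hz y; rewrite EX => /imsetP [a Ga ->].
    apply/cent1P; rewrite cent1J mem_conjg; apply/cent1P/commute_sym.
    apply/commgP/conjg_fixP; apply: NNPP => Hne; apply: Hn.
    exists (z ^ a^-1)^-1%g; last by rewrite invgK; apply/eqP.
    rewrite groupV memJ_norm //; apply: (subsetP (commg_norml G G)); by rewrite groupV.
  have CG : 'C(G)%g = 'C(X)%g by rewrite {1}HgenX cent_gen.
  rewrite -CG in C.
  by move: (subset_trans C (centS HsubG)) => ->.
have Gz : z \in G by apply: (subsetP HsubG).
set v := vpick (Vg x0).
have nzv : v != 0 by rewrite vpick0 Vg_neq0.
have Hv : v \in Vg x0 by apply: memv_pick.
have Hv' : v \in Vg (x0 ^ z^-1)%g by rewrite -(H_triv HP1 v Hz); apply: act_Vg.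
have G1 : (x0 ^ z^-1)%g \in G by rewrite groupJ ?groupV.
move: nzv; have := pi_id Gx0 Gx0 Hv; rewrite eqxx => <-.
by rewrite (pi_id G1 Gx0 Hv') (eq_sym x0) (negbTE nz) eqxx.
Qed.

Lemma final (Hirr : YD_irreducible G act Vg) i : F i = 0%VS \/ F i = fullv.
Proof.
case: (classic (forall x y, x \in X -> y \in X -> x != y -> sep x y)) => Hs.
  exact: caseA.
exfalso; apply: not_HP1; apply: NNPP => HP; apply: Hs => x y Xx Xy xy.
by apply: NNPP => ns; apply: HP; apply: (nsep_P1 Xx Xy xy ns).
Qed.

End Main.

Theorem mainTheorem18 (gT : finGroupType) (G : {group gT}) (X : {set gT})
    (k : fieldType) (V : vectType k)
    (act : gT -> 'End(V)) (Vg : gT -> {vspace V})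
    (c : 'M[k]_(\dim (fullv : {vspace V})) -> 'M[k]_(\dim (fullv : {vspace V}))) :
  (exists2 x, x \in G & X = (x ^: G)%g) ->
  G :=: <<X>>%g ->
  simple [~: G, G]%g ->
  ~~ abelian [~: G, G]%g ->
  is_YD G act Vg ->
  YD_irreducible G act Vg ->
  YD_support G Vg = X ->
  is_YD_braiding G act Vg c ->
  forall F : nat -> {vspace V}, decreasing_filtration c F ->
  forall i, F i = 0%VS \/ F i = fullv.
Proof.
move=> Hcls HgenX Hsimp Hnab HYD Hirr Hsupp Hbr F HF i.
exact: (final HYD Hsupp Hbr HF HgenX Hcls Hsimp Hnab Hirr i).
Qed.
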